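(* Let $n\ge3$, $\zeta=2\pi/n$, $m\in[0,n/2]\cap\mathbb{N}$ with $m\ne n/4$, $a>0$, $V$ smooth, and $k\in\{1,\dots,n-1\}$. The matrix $iJB_k$ maps the real subspace $\mathbb{R}\times i\mathbb{R}\subset\mathbb{C}^2$ into itself, and as a real-linear map on this subspace its eigenvalues are $\nu_k^{\pm}=\beta_k\pm\sqrt{\alpha_k^2(1-\phi_k(a))}$. Moreover: (a) if $k\in[1,n-1]\cap\mathbb{N}$ and $\phi_k(a)\in(-\infty,\gamma_k)$, then $\nu_k^+$ is positive; (b) if $k\in[1,n/2)\cap\mathbb{N}$ and $\phi_k(a)\in(\gamma_k,1)$, then $\nu_k^+$ and $\nu_k^-$ are positive.
   Context: $J=\begin{pmatrix}0&-1\\1&0\end{pmatrix}$. $\alpha_k=4\cos(m\zeta)\sin^2(k\zeta/2)$ (nonzero for $k=1,\dots,n-1$ under the assumption $m\ne n/4$), $\beta_k=2\sin(m\zeta)\sin(k\zeta)$, $\phi_k(a)=\frac{2a^2}{\alpha_k}V''(a^2)$, $\gamma_k=1-(\beta_k/\alpha_k)^2$, and $B_k=\mathrm{diag}(2a^2V''(a^2)-\alpha_k,-\alpha_k)+iJ\beta_k=\alpha_k\,\mathrm{diag}(\phi_k(a)-1,-1)+\beta_k\, iJ$. *)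

(* Defs.v *)
From HB Require Import structures.
From mathcomp Require Import all_boot all_order all_algebra.
From mathcomp Require Import all_classical all_reals all_analysis.
From mathcomp.real_closed Require Import complex.
Set Implicit Arguments. Unset Strict Implicit. Unset Printing Implicit Defensive.
Import Order.TTheory GRing.Theory Num.Theory.
Local Open Scope ring_scope.
Local Open Scope complex_scope.

Section Defs.
Variable R : realType.

Definition smooth (V : R -> R) : Prop :=
  forall (j : nat) (x : R), derivable (iter j (fun f : R -> R => derive1 f) V) x 1.

Definition d2 (V : R -> R) : R -> R := derive1 (fun y : R => derive1 V y).

Definition zeta (n : nat) : R := 2 * pi / n%:R.

Definition alpha (n m k : nat) : R :=
  4 * cos (m%:R * zeta n) * (sin (k%:R * zeta n / 2)) ^+ 2.

Definition beta (n m k : nat) : R :=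
  2 * sin (m%:R * zeta n) * sin (k%:R * zeta n).

Definition phi (V : R -> R) (n m k : nat) (a : R) : R :=
  2 * a ^+ 2 * d2 V (a ^+ 2) / alpha n m k.

Definition gamma (n m k : nat) : R := 1 - (beta n m k / alpha n m k) ^+ 2.

Definition Jmx : 'M[R[i]]_2 :=
  \matrix_(p < 2, q < 2)
    (if (val p == 0%N) && (val q == 1%N) then -1
     else if (val p == 1%N) && (val q == 0%N) then 1 else 0).

Definition Bk (V : R -> R) (n m k : nat) (a : R) : 'M[R[i]]_2 :=
  diag_mx (\row_(q < 2)
     (if val q == 0%N then (2 * a ^+ 2 * d2 V (a ^+ 2) - alpha n m k)%:C
      else (- alpha n m k)%:C))
  + ('i * (beta n m k)%:C) *: Jmx.

Definition iJBk (V : R -> R) (n m k : nat) (a : R) : 'M[R[i]]_2 :=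
  ('i *: Jmx) *m Bk V n m k a.

Definition in_RxiR (v : 'cV[R[i]]_2) : bool :=
  (complex.Im (v ord0 0) == 0) && (complex.Re (v (@Ordinal 2 1 isT) 0) == 0).

Definition emb (x y : R) : 'cV[R[i]]_2 :=
  \col_(p < 2) (if val p == 0%N then x%:C else y *i).

(* matrix (in the real basis (1,0), (0,i) of R x iR) of the real-linear
   map induced by M on R x iR: column j = coordinates of M applied to the
   j-th basis vector. *)
Definition restr_RxiR (M : 'M[R[i]]_2) : 'M[R]_2 :=
  \matrix_(p < 2, q < 2)
    (let w := M *m emb (if val q == 0%N then 1 else 0)
                        (if val q == 1%N then 1 else 0) in
     if val p == 0%N then complex.Re (w ord0 0) else complex.Im (w (@Ordinal 2 1 isT) 0)).

(* nu_k^{+-} = beta_k +- sqrt(alpha_k^2 (1 - phi_k(a))) (principal complex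
   square root, which is the usual real one for nonnegative arguments) *)
Definition nu_plus (V : R -> R) (n m k : nat) (a : R) : R[i] :=
  (beta n m k)%:C + sqrtC ((alpha n m k ^+ 2 * (1 - phi V n m k a))%:C).
Definition nu_minus (V : R -> R) (n m k : nat) (a : R) : R[i] :=
  (beta n m k)%:C - sqrtC ((alpha n m k ^+ 2 * (1 - phi V n m k a))%:C).

End Defs.

(* Main.v *)
Require Import Defs.
From HB Require Import structures.
From mathcomp Require Import all_boot all_order all_algebra.
From mathcomp Require Import all_classical all_reals all_analysis.
From mathcomp.real_closed Require Import complex.
From mathcomp Require Import ring lra.
Import Order.TTheory GRing.Theory Num.Theory.
Local Open Scope ring_scope.
Local Open Scope complex_scope.

Section Trig.
Variables (R : realType) (n m k : nat).
Hypothesis n3 : (3 <= n)%N.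

Lemma n_gt0 : 0 < n%:R :> R.
Proof. by rewrite ltr0n; case: n n3. Qed.

Lemma mulzeta (j : nat) : j%:R * zeta R n = pi * (2 * j%:R / n%:R).
Proof. rewrite /zeta; have := n_gt0; move=> h. field. by rewrite gt_eqF. Qed.

Lemma frac_bounds (p : nat) : (p <= n)%N -> 0 <= p%:R / n%:R :> R /\ p%:R / n%:R <= 1 :> R.
Proof.
move=> hp; have hn := n_gt0; split; first by rewrite divr_ge0 // ler0n.
by rewrite ler_pdivrMr // mul1r ler_nat.
Qed.

Lemma frac_lt (p q : nat) : (p < q)%N -> p%:R / n%:R < q%:R / n%:R :> R.
Proof. move=> h; have hn := n_gt0; by rewrite ltr_pM2r ?invr_gt0 // ltr_nat. Qed.

End Trig.
Section Trig2.
Variables (R : realType) (n m k : nat).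
Hypothesis n3 : (3 <= n)%N.

Lemma zetaE (j : nat) : j%:R * zeta R n = 2 * pi * (j%:R / n%:R) /\ (j%:R / n%:R) * n%:R = j%:R :> R.
Proof. rewrite /zeta; have := @n_gt0 R n n3; move=> h; split; field; by rewrite gt_eqF. Qed.

Lemma cos_ne0 : (2 * m <= n)%N -> (4 * m != n)%N -> cos (m%:R * zeta R n) != 0 :> R.
Proof.
move=> h2 h4; have hn := @n_gt0 R n n3; have pi0 := @pi_gt0 R.
have [-> tn] := zetaE m; set t := m%:R / n%:R in tn *.
have m0 : 0 <= m%:R :> R by rewrite ler0n.
have h2' : 2 * m%:R <= n%:R :> R by rewrite -natrM ler_nat.
case: (ltngtP (4 * m) n) h4 => // h _.
- have h' : 4 * m%:R < n%:R :> R by rewrite -natrM ltr_nat.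
  rewrite gt_eqF // cos_gt0_pihalf //; apply/andP; split; nra.
- have h' : n%:R < 4 * m%:R :> R by rewrite -natrM ltr_nat.
  have -> : 2 * pi * t = (2 * pi * t - pi / 2) + pi / 2 by ring.
  rewrite cosDpihalf oppr_eq0 gt_eqF // sin_gt0_pi //; apply/andP; split; nra.
Qed.

Lemma sin_half_ne0 : (1 <= k <= n - 1)%N -> sin (k%:R * zeta R n / 2) != 0 :> R.
Proof.
move=> /andP[hk1 hk2]; have hn := @n_gt0 R n n3; have pi0 := @pi_gt0 R.
have [e tn] := zetaE k; rewrite e; set t := k%:R / n%:R in tn *.
have k1 : 1 <= k%:R :> R by rewrite ler1n.
have kn : k%:R < n%:R :> R by rewrite ltr_nat; case: n n3 hk2 => // n' _; rewrite subn1 /=.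
rewrite gt_eqF // sin_gt0_pi //; apply/andP; split; nra.
Qed.

Lemma sin_m_ge0 : (2 * m <= n)%N -> 0 <= sin (m%:R * zeta R n) :> R.
Proof.
move=> h2; have hn := @n_gt0 R n n3; have pi0 := @pi_gt0 R.
have [-> tn] := zetaE m; set t := m%:R / n%:R in tn *.
have m0 : 0 <= m%:R :> R by rewrite ler0n.
have h2' : 2 * m%:R <= n%:R :> R by rewrite -natrM ler_nat.
rewrite sin_ge0_pi //; apply/andP; split; nra.
Qed.

Lemma sin_k_gt0 : (1 <= k)%N -> (2 * k < n)%N -> 0 < sin (k%:R * zeta R n) :> R.
Proof.
move=> hk1 h2; have hn := @n_gt0 R n n3; have pi0 := @pi_gt0 R.
have [-> tn] := zetaE k; set t := k%:R / n%:R in tn *.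
have k1 : 1 <= k%:R :> R by rewrite ler1n.
have h2' : 2 * k%:R < n%:R :> R by rewrite -natrM ltr_nat.
rewrite sin_gt0_pi //; apply/andP; split; nra.
Qed.
End Trig2.
Lemma det2 (F : comNzRingType) (A : 'M[F]_2) :
  \det A = A ord0 ord0 * A (@Ordinal 2 1 isT) (@Ordinal 2 1 isT) - A ord0 (@Ordinal 2 1 isT) * A (@Ordinal 2 1 isT) ord0.
Proof.
rewrite (expand_det_row _ ord0) !big_ord_recl !big_ord0 /cofactor !det_mx11 !mxE /=.
have -> : lift ord0 (0 : 'I_1) = @Ordinal 2 1 isT by apply/val_inj.
have -> : lift (@Ordinal 2 1 isT) (0 : 'I_1) = ord0 by apply/val_inj.
by rewrite /= expr0 expr1 mul1r addr0 mulN1r mulrN.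
Qed.
Lemma eigE (F : fieldType) (A : 'M[F]_2) z : eigenvalue A z = (\det (A - z%:M) == 0).
Proof.
by rewrite /eigenvalue /eigenspace kermx_eq0 row_free_unit unitmxE unitfE negbK.
Qed.
Lemma liftE : lift ord0 (ord0 : 'I_1) = @Ordinal 2 1 isT. Proof. exact/val_inj. Qed.

Lemma sqrtC_real (R : realType) (c : R) : 0 <= c -> sqrtC (c%:C) = (Num.sqrt c)%:C.
Proof. move=> c0; by rewrite -{1}(sqr_sqrtr c0) rmorphXn sqrCK // ler0c sqrtr_ge0. Qed.

Section S.
Variables (R : realType) (n m k : nat) (a : R) (V : R -> R).
Let al := alpha R n m k.
Let be := beta R n m k.
Let d := 2 * a ^+ 2 * d2 V (a ^+ 2).
Let o1 := @Ordinal 2 1 isT.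

Ltac sm := rewrite ?(mulr0, mul0r, add0r, addr0, mulr1, mul1r, mulr1n, mulr0n, mulrN1, mulN1r, mulNr, mulrN, opprK).

Lemma iJB00 : iJBk V n m k a ord0 ord0 = be%:C.
Proof.
rewrite /iJBk /Bk !mxE !big_ord_recl !big_ord0 !mxE /=; sm.
by rewrite mulrA -expr2 sqr_i mulN1r opprK.
Qed.
Lemma iJB01 : iJBk V n m k a ord0 o1 = 'i * al%:C.
Proof.
rewrite /iJBk /Bk !mxE !big_ord_recl !big_ord0 !mxE /=; sm.
by rewrite rmorphN mulrN opprK.
Qed.
Lemma iJB10 : iJBk V n m k a o1 ord0 = 'i * (d - al)%:C.
Proof. by rewrite /iJBk /Bk !mxE !big_ord_recl !big_ord0 !mxE /=; sm. Qed.
Lemma iJB11 : iJBk V n m k a o1 o1 = be%:C.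
Proof.
rewrite /iJBk /Bk !mxE !big_ord_recl !big_ord0 !mxE /=; sm.
by rewrite mulrA -expr2 sqr_i mulN1r opprK.
Qed.

Lemma inv_part v : in_RxiR v -> in_RxiR (iJBk V n m k a *m v).
Proof.
rewrite /in_RxiR => /andP[/eqP h0 /eqP h1].
rewrite !mxE !big_ord_recl !big_ord0 liftE -/o1 iJB00 iJB01 iJB10 iJB11.
move: h0 h1; case: (v ord0 0) => x0 y0; case: (v o1 0) => x1 y1 /= -> ->.
by apply/andP; split; apply/eqP; ring.
Qed.

Lemma restrE : restr_RxiR (iJBk V n m k a) = \matrix_(p < 2, q < 2)
  (if val p == 0%N then (if val q == 0%N then be else - al)
   else (if val q == 0%N then d - al else be)).
Proof.
have gen : forall M : 'M[R[i]]_2, restr_RxiR M = \matrix_(p < 2, q < 2)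
  (if val p == 0%N then (if val q == 0%N then complex.Re (M ord0 ord0) else complex.Re (M ord0 o1 * 'i))
   else (if val q == 0%N then complex.Im (M o1 ord0) else complex.Im (M o1 o1 * 'i))).
  move=> M; apply/matrixP => p q; rewrite !mxE.
  case: p => [[|[|p]] hp] //; case: q => [[|[|q]] hq] //=;
  rewrite !mxE !big_ord_recl !big_ord0 !mxE liftE -/o1 /=;
  case: (M _ _) => [x y]; case: (M _ _) => [x' y'] /=; ring.
rewrite gen; apply/matrixP => p q; rewrite [LHS]mxE [RHS]mxE.
case: p => [[|[|p]] hp] //; case: q => [[|[|q]] hq] //=; rewrite ?iJB00 ?iJB01 ?iJB10 ?iJB11 /=; ring.
Qed.
End S.

Theorem lemma1 (R : realType) (n m k : nat) (a : R) (V : R -> R) :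
  (3 <= n)%N -> (2 * m <= n)%N -> (4 * m != n)%N ->
  0 < a -> smooth V -> (1 <= k <= n - 1)%N ->
  (forall v : 'cV[R[i]]_2, in_RxiR v -> in_RxiR (iJBk V n m k a *m v)) /\
  (forall z : R[i],
     eigenvalue (map_mx (fun x : R => x%:C) (restr_RxiR (iJBk V n m k a))) z
     <-> (z = nu_plus V n m k a \/ z = nu_minus V n m k a)) /\
  (phi V n m k a < gamma R n m k -> 0 < nu_plus V n m k a) /\
  ((2 * k < n)%N -> gamma R n m k < phi V n m k a < 1 ->
     0 < nu_plus V n m k a /\ 0 < nu_minus V n m k a).
Proof.
move=> n3 h2m h4m a0 sV hk.
set al := alpha R n m k; set be := beta R n m k; set d := 2 * a ^+ 2 * d2 V (a ^+ 2).
have alne : al != 0.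
  rewrite /al /alpha mulf_neq0 // ?expf_neq0 //; last exact: (@sin_half_ne0 R n k n3 hk).
  by rewrite mulf_neq0 // ?pnatr_eq0 //; exact: (@cos_ne0 R n m n3 h2m h4m).
have phiE : phi V n m k a = d / al by [].
set c := al ^+ 2 * (1 - d / al).
have nupE : nu_plus V n m k a = be%:C + sqrtC c%:C by rewrite /nu_plus phiE.
have numE : nu_minus V n m k a = be%:C - sqrtC c%:C by rewrite /nu_minus phiE.
split; first exact: inv_part.
split.
  move=> z; rewrite eigE det2 restrE !mxE /=.
  have key : ((be%:C - z *+ 1) * (be%:C - z *+ 1) - ((- al)%:C - z *+ 0) * ((d - al)%:C - z *+ 0))
     = (z - be%:C) ^+ 2 - (sqrtC c%:C) ^+ 2.
    rewrite sqrtCK /c; case: z => x y; apply/eqP; rewrite eq_complex /=.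
    by apply/andP; split; apply/eqP; field.
  rewrite key subr_eq0 eqf_sqr !subr_eq nupE numE [sqrtC _ + _]addrC [- sqrtC _ + _]addrC.
  split => [/orP[/eqP->|/eqP->]|[->|->]]; by [left|right|rewrite eqxx ?orbT].
have gE : gamma R n m k = 1 - (be / al) ^+ 2 by [].
have cdiff : c - be ^+ 2 = al ^+ 2 * ((1 - d / al) - (be / al) ^+ 2) by rewrite /c; field.
have al2 : 0 < al ^+ 2 by rewrite exprn_even_gt0.
have be2 : 0 <= be ^+ 2 by rewrite sqr_ge0.
split.
  rewrite phiE gE => h.
  have hc : be ^+ 2 < c by rewrite -subr_gt0 cdiff mulr_gt0 // subr_gt0; lra.
  have c0 : 0 < c by lra.
  have hs : `|be| < Num.sqrt c by rewrite -sqrtr_sqr ltr_sqrt.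
  have := ler_norm (- be); rewrite normrN => hb.
  rewrite nupE sqrtC_real ?ltW // -rmorphD ltcE /= eqxx /=; lra.
move=> h2k; rewrite phiE gE => /andP[h1 h2].
have hc : c < be ^+ 2 by rewrite -subr_lt0 cdiff pmulr_rlt0 // subr_lt0; lra.
have c0 : 0 < c by rewrite /c mulr_gt0 // subr_gt0.
have be0 : 0 <= be.
  rewrite /be /beta mulr_ge0 // ?mulr_ge0 // ?(@sin_m_ge0 R n m n3 h2m) //.
  by apply: ltW; apply: (@sin_k_gt0 R n k n3) => //; case/andP: hk.
have hs : Num.sqrt c < be by rewrite -(ger0_norm be0) -sqrtr_sqr ltr_sqrt // (lt_trans c0).
have hs0 : 0 <= Num.sqrt c by rewrite sqrtr_ge0.
rewrite nupE numE sqrtC_real ?ltW // -rmorphD -rmorphB !ltcE /= eqxx /=; split; lra.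
Qed.
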